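(* Let $\mu$ be a stationary ergodic process on $[0,1]^{\mathbb N}$. For every $m\in\mathbb N$, \[\lim_{n,\ell\to\infty}\alpha_n^{\ell}(m)=\alpha(m).\]
   Context: Setting: $\mathscr X=[0,1]$ with its Borel $\sigma$-algebra; a process is a probability measure $\mu$ on $\mathscr X^{\mathbb N}$ (product Borel $\sigma$-algebra), $X_t$ the $t$-th coordinate. For $\sigma$-subalgebras $\mathfrak U,\mathfrak V$, $\alpha(\mathfrak U,\mathfrak V):=\sup_{U\in\mathfrak U,V\in\mathfrak V}|\mu(U\cap V)-\mu(U)\mu(V)|$, and the $\alpha$-mixing coefficients are $\alpha(m):=\sup_{j\in\mathbb N}\alpha\big(\sigma(X_1,\dots,X_j),\sigma(X_t:t\ge j+m)\big)$, $m\in\mathbb N$. Dyadic sets: for $\ell\in\mathbb N$ let $I_{\ell,i}=[i2^{-\ell},(i+1)2^{-\ell})$, $i=0,\dots,2^\ell-1$ (last interval closed, so they partition $[0,1]$); $\Delta_{k,\ell}$ is the set of the $2^{k\ell}$ cubes $I_{\ell,i_1}\times\cdots\times I_{\ell,i_k}\subseteq[0,1]^k$, and $\mathcal D_{k,\ell}$ is the family of all unions of cubes in $\Delta_{k,\ell}$. For $m,\ell\in\mathbb N$, $n>m$, $j\in\{1,\dots,n-m\}$, $j':=n-m-j+1$: \[\alpha_{n,j}^{\ell}(m):=\max_{A\in\mathcal D_{j,\ell},\,B\in\mathcal D_{j',\ell}}\Big|\mu\big((X_1,\dots,X_j)\in A,\ (X_{j+m},\dots,X_n)\in B\big)-\mu\big((X_1,\dots,X_j)\in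 A\big)\mu\big((X_{j+m},\dots,X_n)\in B\big)\Big|,\] and $\alpha_n^{\ell}(m):=\max_{j\in\{1,\dots,n-m\}}\alpha_{n,j}^{\ell}(m)$. The limit is the joint limit as both $n$ and $\ell$ tend to infinity. *)

(* Defs.v *)
From HB Require Import structures.
From mathcomp Require Import all_boot all_order all_algebra.
From mathcomp Require Import all_classical all_reals all_analysis.
Unset Printing Implicit Defensive.
Import Order.TTheory GRing.Theory Num.Theory.
Import numFieldNormedType.Exports.
Local Open Scope classical_set_scope.
Local Open Scope ring_scope.

(* Sample paths: x : nat -> R, with the paper's X_t (t = 1,2,...) being the
   coordinate x (t - 1).  The process lives on [0,1]^N; we work on R^N with
   the product Borel sigma-algebra and require the measure to be carried by
   [0,1]^N (hypothesis in the theorem). *)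

Definition coord_gen (R : realType) (I : set nat) : set (set (nat -> R)) :=
  [set A | exists i (B : set R), [/\ I i, measurable B &
                                     A = (fun x : nat -> R => x i) @^-1` B]].

Notation pathspace R := (g_sigma_algebraType (coord_gen R setT)).

Definition sigma_coords (R : realType) (I : set nat) : set (set (nat -> R)) :=
  <<s coord_gen R I >>.

Definition shift (R : realType) (x : nat -> R) : nat -> R := fun t => x t.+1.

Definition stationary (R : realType) (mu : probability (pathspace R) R) :=
  forall A : set (pathspace R), measurable A -> mu (shift R @^-1` A) = mu A.

Definition ergodic (R : realType) (mu : probability (pathspace R) R) :=
  forall A : set (pathspace R), measurable A -> shift R @^-1` A = A ->
    mu A = 0%E \/ mu A = 1%E.

Definition supported_on_unit_cube (R : realType) (mu : probability (pathspace R) R) :=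
  mu [set x : pathspace R | forall t, 0 <= x t <= 1] = 1%E.

(* alpha-mixing coefficient alpha(m): paper's X_1..X_j are coordinates 0..j-1,
   and X_t, t >= j+m, are coordinates >= j+m-1 *)
Definition alpha_mix (R : realType) (mu : probability (pathspace R) R) (m : nat)
  : \bar R :=
  ereal_sup [set r | exists (j : nat) (U V : set (pathspace R)),
     [/\ (1 <= j)%N,
         sigma_coords R [set i | (i < j)%N] U,
         sigma_coords R [set i | (j + m - 1 <= i)%N] V &
         r = `| mu (U `&` V) - mu U * mu V |%E]].

(* dyadic interval I_{l,i}; the last one (i = 2^l - 1) is closed *)
Definition dyad (R : realType) (l i : nat) : set R :=
  if (i.+1 < 2 ^ l)%N then
    [set x | i%:R / 2 ^+ l <= x < i.+1%:R / 2 ^+ l]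
  else [set x | i%:R / 2 ^+ l <= x <= i.+1%:R / 2 ^+ l].

Definition dyadic_event (R : realType) (s k l : nat)
  (S : {set {ffun 'I_k -> 'I_(2 ^ l)}}) : set (pathspace R) :=
  [set x | exists2 c, c \in S & forall i : 'I_k, dyad R l (c i) (x (s + i)%N)].

(* alpha^l_{n,j}(m) : j' = n - m - j + 1 *)
Definition alpha_nlj (R : realType) (mu : probability (pathspace R) R)
  (m n l j : nat) : \bar R :=
  ereal_sup [set r | exists (S : {set {ffun 'I_j -> 'I_(2 ^ l)}})
                            (T : {set {ffun 'I_(n - m - j + 1) -> 'I_(2 ^ l)}}),
     r = `| mu (dyadic_event R 0 j l S `&`
                dyadic_event R (j + m - 1) (n - m - j + 1) l T)
           - mu (dyadic_event R 0 j l S)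
             * mu (dyadic_event R (j + m - 1) (n - m - j + 1) l T) |%E].

Definition alpha_nl (R : realType) (mu : probability (pathspace R) R)
  (m n l : nat) : \bar R :=
  ereal_sup [set alpha_nlj R mu m n l j | j in [set j | (1 <= j <= n - m)%N]].

(* Main.v *)
Set Warnings "-all".
Require Import Defs.
From HB Require Import structures.
From mathcomp Require Import all_boot all_order all_algebra.
From mathcomp Require Import all_classical all_reals all_analysis.
From mathcomp Require Import zify ring lra.
Import Order.TTheory GRing.Theory Num.Theory.
Import numFieldNormedType.Exports.
Local Open Scope classical_set_scope.
Local Open Scope ring_scope.

Section dyad_facts.
Context (R : realType).

Lemma dyad_ex (l : nat) (x : R) : 0 <= x <= 1 ->
  exists i : 'I_(2 ^ l), dyad R l i x.
Proof.
move=> /andP[x0 x1].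
have p0 : (0 < 2 ^ l)%N by rewrite expn_gt0.
have p0r : (0 : R) < 2 ^+ l by rewrite exprn_gt0.
pose t := Num.trunc (x * 2 ^+ l).
have xt0 : 0 <= x * 2 ^+ l by rewrite mulr_ge0 // ltW.
have /andP[t1 t2] := truncn_itv xt0.
have tle : (t <= 2 ^ l)%N.
  rewrite truncn_le_nat; apply: (le_lt_trans (y := 2 ^+ l)).
    by rewrite -[X in _ <= X]mul1r ler_pM2r.
  by rewrite -natrX ltr_nat.
case: (ltnP t (2 ^ l)) => ht.
  exists (Ordinal ht); rewrite /dyad /=.
  case: ifP => _ /=; rewrite ler_pdivrMr // ?ltr_pdivlMr // ?ler_pdivlMr //.
    by rewrite t1 t2.
  by rewrite t1 ltW.
have tE : t = (2 ^ l)%N by apply/eqP; rewrite eqn_leq tle ht.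
have lt1 : (2 ^ l - 1 < 2 ^ l)%N by rewrite subn1 prednK // leqnn.
exists (Ordinal lt1); rewrite /dyad /= subn1 prednK // ltnn /=.
rewrite ler_pdivrMr // ler_pdivlMr //.
apply/andP; split; first by apply: le_trans t1; rewrite ler_nat -/t tE leq_pred.
by rewrite natrX ler_piMl // ltW.
Qed.
Lemma dyad_lo l (i : nat) (x : R) : dyad R l i x -> i%:R <= x * 2 ^+ l.
Proof.
have p0r : (0 : R) < 2 ^+ l by rewrite exprn_gt0.
by rewrite /dyad; case: ifP => _ /= /andP[+ _]; rewrite ler_pdivrMr.
Qed.

Lemma dyad_hi l (i : nat) (x : R) : (i < 2 ^ l)%N -> dyad R l i x ->
  forall i' : nat, (i' < 2 ^ l)%N -> i'%:R <= x * 2 ^+ l -> (i' <= i)%N.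
Proof.
have p0r : (0 : R) < 2 ^+ l by rewrite exprn_gt0.
move=> il; rewrite /dyad; case: ifP => h /= /andP[_ H] i' i'l H'.
  rewrite ltr_pdivlMr // in H.
  by have := le_lt_trans H' H; rewrite ltr_nat ltnS.
by move/negbT: h; rewrite -leqNgt => h1; lia.
Qed.

Lemma dyad_uniq l (i i' : 'I_(2 ^ l)) (x : R) : dyad R l i x -> dyad R l i' x -> i = i'.
Proof.
move=> h h'; apply/val_inj/eqP; rewrite eqn_leq.
apply/andP; split.
  by apply: (@dyad_hi l i' x (ltn_ord i') h' (val i) (ltn_ord i)); apply: dyad_lo h.
by apply: (@dyad_hi l i x (ltn_ord i) h (val i') (ltn_ord i')); apply: dyad_lo h'.
Qed.

Lemma dyad_up l (i : nat) (x : R) : dyad R l i x -> x <= i.+1%:R / 2 ^+ l.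
Proof. by rewrite /dyad; case: ifP => _ /= /andP[_ H] //; rewrite ltW. Qed.

Lemma dyad_ge0 l (i : nat) (x : R) : dyad R l i x -> 0 <= x.
Proof.
move=> /dyad_lo H; have p0r : (0 : R) < 2 ^+ l by rewrite exprn_gt0.
by rewrite -(pmulr_lge0 _ p0r); apply: le_trans H.
Qed.

End dyad_facts.
Arguments dyad_ex {R}. Arguments dyad_uniq {R}. Arguments dyad_lo {R}. Arguments dyad_hi {R}. Arguments dyad_up {R}. Arguments dyad_ge0 {R}.

Section meas.
Context (R : realType).

Lemma dyad_meas l (i : nat) : measurable (dyad R l i).
Proof.
rewrite /dyad; case: ifP => _.
  have -> : [set x : R | i%:R / 2 ^+ l <= x < i.+1%:R / 2 ^+ l] =
    `[i%:R / 2 ^+ l, i.+1%:R / 2 ^+ l[%classic.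
    by apply/seteqP; split => x /=; rewrite in_itv.
  exact: measurable_itv.
have -> : [set x : R | i%:R / 2 ^+ l <= x <= i.+1%:R / 2 ^+ l] =
  `[i%:R / 2 ^+ l, i.+1%:R / 2 ^+ l]%classic.
  by apply/seteqP; split => x /=; rewrite in_itv.
exact: measurable_itv.
Qed.

Lemma coord_measI (I : set nat) i (B : set R) : I i -> measurable B ->
  sigma_coords R I ((fun x : nat -> R => x i) @^-1` B).
Proof. by move=> Ii mB; apply: sub_sigma_algebra; exists i, B. Qed.

Lemma sigma_coords_sub (I : set nat) (U : set (pathspace R)) :
  sigma_coords R I U -> measurable U.
Proof.
apply: sub_sigma_algebra2 => A [i [B [_ mB ->]]]; by exists i, B.
Qed.

Lemma dyadic_eventE s k l (S : {set {ffun 'I_k -> 'I_(2 ^ l)}}) :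
  dyadic_event R s k l S = \bigcup_(c in [set c | c \in S])
     \bigcap_(t in [set: 'I_k]) ((fun x : nat -> R => x (s + t)%N) @^-1` dyad R l (c t)).
Proof.
apply/seteqP; split => x /=.
  by move=> [c cS H]; exists c => // t _; apply: H.
by move=> [c cS H]; exists c => // t; apply: H.
Qed.

Lemma dyadic_measI (I : set nat) s k l (S : {set {ffun 'I_k -> 'I_(2 ^ l)}}) :
  (forall t : 'I_k, I (s + t)%N) -> sigma_coords R I (dyadic_event R s k l S).
Proof.
move=> HI; rewrite dyadic_eventE.
change (@measurable _ (g_sigma_algebraType (coord_gen R I))
  (\bigcup_(c in [set c | c \in S])
     \bigcap_(t in [set: 'I_k]) ((fun x : nat -> R => x (s + t)%N) @^-1` dyad R l (c t)))).
apply: fin_bigcup_measurable; first exact: finite_finset.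
move=> c _; apply: fin_bigcap_measurable; first exact: finite_finset.
move=> t _; apply: coord_measI => //; exact: dyad_meas.
Qed.

Lemma dyadic_meas s k l (S : {set {ffun 'I_k -> 'I_(2 ^ l)}}) :
  measurable (dyadic_event R s k l S : set (pathspace R)).
Proof. exact: (@dyadic_measI setT). Qed.

End meas.
Arguments dyad_meas {R}. Arguments coord_measI {R}. Arguments sigma_coords_sub {R}. Arguments dyadic_eventE {R}. Arguments dyadic_measI {R}. Arguments dyadic_meas {R}.

Section approx.
Context (R : realType) (mu : probability (pathspace R) R).
Local Notation PS := (pathspace R).

Definition P (X : set PS) : R := fine (mu X).

Lemma muE {X} : measurable X -> mu X = (P X)%:E.
Proof.
move=> mX; rewrite /P fineK // ge0_fin_numE ?measure_ge0 //.
by apply: (le_lt_trans (probability_le1 _ mX)); rewrite ltry.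
Qed.

Lemma P_ge0 X : 0 <= P X.
Proof. by rewrite /P fine_ge0 // measure_ge0. Qed.

Lemma P_le1 {X} : measurable X -> P X <= 1.
Proof. by move=> mX; rewrite -lee_fin -muE //; apply: probability_le1. Qed.

Lemma P_mono {X Y} : measurable X -> measurable Y -> X `<=` Y -> P X <= P Y.
Proof.
by move=> mX mY XY; rewrite -lee_fin -!muE //; apply: le_measure => //; rewrite inE.
Qed.

Lemma P_U2 {X Y} : measurable X -> measurable Y -> P (X `|` Y) <= P X + P Y.
Proof.
move=> mX mY; rewrite -lee_fin EFinD -!muE //; last exact: measurableU.
exact: measureU2.
Qed.

Lemma P0 : P set0 = 0.
Proof. by rewrite /P measure0. Qed.

Definition Cube : set PS := [set x | forall t, 0 <= x t <= 1].

Lemma Cube_meas : measurable Cube.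
Proof.
have -> : Cube = \bigcap_(t in [set: nat]) ((fun x : nat -> R => x t) @^-1` `[0, 1]%classic).
  by apply/seteqP; split => x /= H t; [move=> _|]; have := H t; rewrite /= ?in_itv //=; apply.
apply: bigcap_measurable; first by exists 0%N.
move=> t _; apply: sigma_coords_sub; apply: coord_measI => //; exact: measurable_itv.
Qed.

Lemma P_nC : supported_on_unit_cube R mu -> P (~` Cube) = 0.
Proof.
move=> supp; rewrite /P probability_setC; last exact: Cube_meas.
by rewrite /supported_on_unit_cube in supp; rewrite -/Cube supp subee.
Qed.

Definition sd (A B : set PS) := (A `\` B) `|` (B `\` A).

Lemma sd_meas {A B} : measurable A -> measurable B -> measurable (sd A B).
Proof. by move=> mA mB; apply: measurableU; apply: measurableD. Qed.

Lemma sd_tri A B C : sd A C `<=` sd A B `|` sd B C.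
Proof.
move=> x [[Ax nCx]|[Cx nAx]].
  by case: (pselect (B x)) => Bx; [right; left|left; left].
by case: (pselect (B x)) => Bx; [left; right|right; right].
Qed.

Lemma P_sd_tri {A B C} : measurable A -> measurable B -> measurable C ->
  P (sd A C) <= P (sd A B) + P (sd B C).
Proof.
move=> mA mB mC; apply: le_trans _ (P_U2 (sd_meas mA mB) (sd_meas mB mC)).
apply: P_mono; [exact: sd_meas| |exact: sd_tri].
by apply: measurableU; apply: sd_meas.
Qed.

Lemma sd_sym A B : sd A B = sd B A.
Proof. by rewrite /sd setUC. Qed.


Lemma dyad_vec s k l (x : PS) : Cube x ->
  exists c : {ffun 'I_k -> 'I_(2 ^ l)}, forall t : 'I_k, dyad R l (c t) (x (s + t)%N).
Proof.
move=> Cx; exists [ffun t : 'I_k => proj1_sig (cid (dyad_ex l _ (Cx (s + t)%N)))].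
by move=> t; rewrite ffunE; case: cid => i Hi...
Qed.

Lemma dyad_vec_uniq s k l (x : PS) (c c' : {ffun 'I_k -> 'I_(2 ^ l)}) :
  (forall t : 'I_k, dyad R l (c t) (x (s + t)%N)) ->
  (forall t : 'I_k, dyad R l (c' t) (x (s + t)%N)) -> c = c'.
Proof. by move=> H H'; apply/ffunP => t; apply: dyad_uniq (H t) (H' t). Qed.

Lemma dyadic_event0 s k l : dyadic_event R s k l finset.set0 = set0.
Proof. by apply/seteqP; split => x //= [c]; rewrite inE. Qed.

Lemma dyadic_eventU s k l S T :
  dyadic_event R s k l (S :|: T) = dyadic_event R s k l S `|` dyadic_event R s k l T.
Proof.
apply/seteqP; split => x /=.
  by move=> [c]; rewrite inE => /orP[cS|cT] H; [left|right]; exists c.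
by move=> [[c cS H]|[c cT H]]; exists c => //; rewrite inE ?cS ?cT ?orbT.
Qed.

Lemma sdU A B A' B' : sd (A `|` B) (A' `|` B') `<=` sd A A' `|` sd B B'.
Proof. move=> x; rewrite /sd /setD /setU /=; tauto. Qed.

Section good.
Variables (s : nat) (kf : nat -> nat).
Hypothesis supp : supported_on_unit_cube R mu.

Definition good (U : set PS) := measurable U /\ forall e : R, 0 < e -> exists N : nat,
  forall l n : nat, (N <= l)%N -> (N <= n)%N ->
  exists S : {set {ffun 'I_(kf n) -> 'I_(2 ^ l)}},
    P (sd U (dyadic_event R s (kf n) l S)) < e.

Lemma good_approx U : measurable U ->
  (forall e, 0 < e -> exists W, good W /\ P (sd U W) < e) -> good U.
Proof.
move=> mU H; split => // e e0.
have e20 : 0 < e / 2 by rewrite divr_gt0.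
have [W [[mW HW] UW]] := H _ e20.
have [N HN] := HW _ e20.
exists N => l n Nl Nn; have [S HS] := HN l n Nl Nn; exists S.
apply: le_lt_trans (P_sd_tri mU mW (dyadic_meas _ _ _ _)) _.
by rewrite [e](splitr e); exact: ltrD.
Qed.

Lemma good0 : good set0.
Proof.
split => // e e0; exists 0%N => l n _ _; exists finset.set0.
by rewrite dyadic_event0 /sd setD0 setU0 P0.
Qed.

Lemma goodU U V : good U -> good V -> good (U `|` V).
Proof.
move=> [mU HU] [mV HV]; split; first exact: measurableU.
move=> e e0; have e20 : 0 < e / 2 by rewrite divr_gt0.
have [N1 H1] := HU _ e20; have [N2 H2] := HV _ e20.
exists (maxn N1 N2) => l n Nl Nn.
have [S HS] := H1 l n (leq_trans (leq_maxl _ _) Nl) (leq_trans (leq_maxl _ _) Nn).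
have [T HT] := H2 l n (leq_trans (leq_maxr _ _) Nl) (leq_trans (leq_maxr _ _) Nn).
exists (S :|: T); rewrite dyadic_eventU.
have mA : measurable (dyadic_event R s (kf n) l S) := dyadic_meas _ _ _ _.
have mB : measurable (dyadic_event R s (kf n) l T) := dyadic_meas _ _ _ _.
apply: le_lt_trans; first apply: P_mono (sdU U V (dyadic_event R s (kf n) l S) (dyadic_event R s (kf n) l T)).
- by apply: sd_meas; apply: measurableU.
- by apply: measurableU; apply: sd_meas.
apply: le_lt_trans (P_U2 (sd_meas mU mA) (sd_meas mV mB)) _.
by rewrite [e](splitr e); exact: ltrD.
Qed.

Lemma goodC U : good U -> good (~` U).
Proof.
move=> [mU HU]; split; first exact: measurableC.
move=> e e0; have [N HN] := HU e e0; exists N => l n Nl Nn.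
have [S HS] := HN l n Nl Nn; exists (~: S).
have mA : measurable (dyadic_event R s (kf n) l S) := dyadic_meas _ _ _ _.
have mA' : measurable (dyadic_event R s (kf n) l (~: S)) := dyadic_meas _ _ _ _.
have sub : sd (~` U) (dyadic_event R s (kf n) l (~: S)) `<=`
    sd U (dyadic_event R s (kf n) l S) `|` ~` Cube.
  move=> x; case: (pselect (Cube x)) => Cx; last by right.
  move=> [[nUx nA'x]|[A'x nnUx]]; left.
  - right; split => //; have [c Hc] := dyad_vec s (kf n) l _ Cx; exists c => //.
    case: (boolP (c \in S)) => cS //; exfalso; apply: nA'x; exists c => //.
    by rewrite inE cS.
  - left; split; first by case: (pselect (U x)).
    move=> [c cS Hc]; case: A'x => c' c'S Hc'.
    have cc' := dyad_vec_uniq _ _ _ _ _ _ Hc Hc'; move: c'S; rewrite -cc' inE cS //.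
have mC : measurable (~` Cube) by apply: measurableC; exact: Cube_meas.
apply: le_lt_trans (P_mono _ _ sub) _.
- by apply: sd_meas => //; exact: measurableC.
- by apply: measurableU => //; exact: sd_meas.
apply: le_lt_trans (P_U2 (sd_meas mU mA) mC) _.
by rewrite P_nC // addr0.
Qed.

Lemma good_bigcup (F : (set PS)^nat) : (forall k, good (F k)) -> good (\bigcup_k F k).
Proof.
move=> gF.
pose G K := \big[setU/set0]_(i < K.+1) F i.
have gG K : good (G K).
  rewrite /G; elim: K => [|K IH]; first by rewrite big_ord_recr big_ord0 /= set0U.
  by rewrite big_ord_recr /=; apply: goodU.
have mG K : measurable (G K) by case: (gG K).
have mF : measurable (\bigcup_k F k).
  by apply: bigcupT_measurable => k; case: (gF k).
have GE : \bigcup_k G k = \bigcup_k F k by exact: bigcup_bigsetU_bigcup.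
have ndG : nondecreasing_seq G.
  apply/nondecreasing_seqP => n; rewrite /G [X in (_ <= X)%O]big_ord_recr /=.
  by apply/subsetPset; exact: subsetUl.
have mGb : measurable (\bigcup_k G k) by rewrite GE.
have cv := @nondecreasing_cvg_mu _ _ _ mu G mG mGb ndG.
have cv1 : (mu \o G) x @[x --> \oo] --> (P (\bigcup_k F k))%:E.
  by rewrite -muE // -GE; exact: cv.
have cv' : (P \o G) x @[x --> \oo] --> P (\bigcup_k F k) := fine_cvg cv1.
apply: good_approx => // e e0.
have lt1 : P (\bigcup_k F k) - e < P (\bigcup_k F k) by rewrite ltrBlDr ltrDl.
have [K _ HK] := cvgr_gt _ (cv' _) _ lt1.
have HK' := HK K (leqnn K); rewrite /= -/(P (G K)) in HK'.
exists (G K); split => //.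
have GF : G K `<=` \bigcup_k F k by rewrite -GE; exact: bigcup_sup.
have mD : measurable (\bigcup_k F k `\` G K) by exact: measurableD.
have sdE : sd (\bigcup_k F k) (G K) = \bigcup_k F k `\` G K.
  by rewrite /sd (_ : G K `\` _ = set0) ?setU0 //; apply/seteqP; split => x //= [/GF].
have eqU : P (\bigcup_k F k) = P (G K) + P (\bigcup_k F k `\` G K).
  apply/EFin_inj; rewrite EFinD -!muE // -measureU //; first by rewrite setDUK.
  by apply/seteqP; split => x //= [? []].
rewrite sdE; move: HK'; rewrite eqU; lra.
Qed.

Lemma good_sigma : sigma_algebra setT good.
Proof.
split; [exact: good0| |exact: good_bigcup].
by move=> A gA; rewrite setTD; apply: goodC.
Qed.

Lemma good_sub_sigma (I : set nat) :
  (forall i (B : set R), I i -> measurable B -> good ((fun x : PS => x i) @^-1` B)) ->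
  forall U, sigma_coords R I U -> good U.
Proof.
move=> H U; apply: smallest_sub; first exact: good_sigma.
by move=> _ [i [B [Ii mB ->]]]; apply: H.
Qed.

Lemma goodI U V : good U -> good V -> good (U `&` V).
Proof.
move=> gU gV; have := goodC _ (goodU _ _ (goodC _ gU) (goodC _ gV)).
by rewrite setCU !setCK.
Qed.

Lemma good_half i (a : R) : (s <= i)%N ->
  (exists N0, forall n, (N0 <= n)%N -> (i < s + kf n)%N) ->
  good ((fun x : PS => x i) @^-1` [set y | y <= a]).
Proof.
move=> si [N0 HN0].
have mH : measurable ((fun x : PS => x i) @^-1` [set y : R | y <= a]).
  apply: sigma_coords_sub; apply: (coord_measI setT) => //.
  rewrite (_ : [set y | y <= a] = `]-oo, a]%classic); first exact: measurable_itv.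
  by apply/seteqP; split => y /=; rewrite in_itv.
split => // e e0.
pose D (l : nat) := (fun x : PS => x i) @^-1` `]a, a + (l.+1%:R)^-1]%classic.
have mD l : measurable (D l).
  apply: sigma_coords_sub; apply: (coord_measI setT) => //; exact: measurable_itv.
have D0 : \bigcap_l D l = set0.
  apply/seteqP; split => x //= Hx.
  have := Hx 0%N I; rewrite /D /= in_itv /= => /andP[ax _].
  have [k hk] := ltr_add_invr ax.
  have := Hx k I; rewrite /D /= in_itv /= => /andP[_ hx].
  by move: (le_lt_trans hx hk); rewrite ltxx.
have niD : nonincreasing_seq D.
  apply/nonincreasing_seqP => l; apply/subsetPset => x.
  rewrite /D /= !in_itv /= => /andP[-> h] /=.
  apply: le_trans h _; rewrite lerD2l lef_pV2 ?posrE // ler_nat; done.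
have mD0 : (mu (D 0%N) < +oo)%E by rewrite muE // ltry.
have mDb : measurable (\bigcap_l D l) by rewrite D0.
have cv := @nonincreasing_cvg_mu _ _ _ mu D mD0 mD mDb niD.
have cv1 : (mu \o D) x @[x --> \oo] --> (P set0)%:E.
  by rewrite -muE // -D0; exact: cv.
have cv' : (P \o D) x @[x --> \oo] --> P set0 := fine_cvg cv1.
have lt1 : P set0 < e by rewrite P0.
have [L _ HL] := cvgr_lt _ (cv' _) _ lt1.
exists (maxn L N0) => l n Nl Nn.
have hin : (i < s + kf n)%N := HN0 n (leq_trans (leq_maxr _ _) Nn).
have tlt : (i - s < kf n)%N by lia.
pose t0 : 'I_(kf n) := Ordinal tlt.
exists (finset (fun c : {ffun 'I_(kf n) -> 'I_(2 ^ l)} =>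
  [forall t : 'I_(kf n), ((s + t)%N == i) ==> ((c t)%:R / 2 ^+ l <= a)])).
set A := dyadic_event _ _ _ _ _.
have mA : measurable A := dyadic_meas _ _ _ _.
have p0r : (0 : R) < 2 ^+ l by rewrite exprn_gt0.
have sub : sd ((fun x : PS => x i) @^-1` [set y | y <= a]) A `<=` (~` Cube) `|` D l.
  move=> x hx; case: (pselect (Cube x)) => Cx; last by left.
  right; move: hx => [[xa nA]|[Ax nxa]].
  - exfalso; apply: nA; have [c Hc] := dyad_vec s (kf n) l _ Cx; exists c => //.
    rewrite inE; apply/forallP => t; apply/implyP => /eqP st.
    apply: le_trans xa; rewrite -st ler_pdivrMr //; exact: dyad_lo _ _ _ (Hc t).
  - case: Ax => c; rewrite inE => /forallP /(_ t0) /implyP H0 Hc.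
    have st0 : (s + t0)%N = i by rewrite /= subnKC.
    have ca := H0 (introT eqP st0).
    have hx := dyad_up _ _ _ (Hc t0); rewrite st0 in hx.
    rewrite /D /= in_itv /=; apply/andP; split.
      by rewrite ltNge; apply/negP.
    apply: le_trans hx _.
    rewrite -addn1 natrD mulrDl lerD // mul1r lef_pV2 ?posrE // -natrX ler_nat.
    exact: ltn_expl.
have mC : measurable (~` Cube) by apply: measurableC; exact: Cube_meas.
apply: le_lt_trans (P_mono _ _ sub) _.
- by apply: sd_meas.
- by apply: measurableU.
apply: le_lt_trans (P_U2 mC (mD l)) _.
rewrite P_nC // add0r.
exact: (HL l (leq_trans (leq_maxl _ _) Nl)).
Qed.

Lemma good_coord i : (s <= i)%N ->
  (exists N0, forall n, (N0 <= n)%N -> (i < s + kf n)%N) ->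
  forall B : set R, measurable B -> good ((fun x : PS => x i) @^-1` B).
Proof.
move=> si hN B mB.
pose GR := [set B : set R | good ((fun x : PS => x i) @^-1` B)].
have sGR : sigma_algebra setT GR.
  split.
  - by rewrite /GR /= preimage_set0; exact: good0.
  - move=> A gA; rewrite /GR /=.
    rewrite (_ : _ @^-1` _ = ~` ((fun x : PS => x i) @^-1` A)); first exact: goodC.
    by apply/seteqP; split => x /=; rewrite /setD /=; tauto.
  - move=> F gF; rewrite /GR /=.
    rewrite (_ : _ @^-1` _ = \bigcup_k ((fun x : PS => x i) @^-1` F k)).
      exact: good_bigcup.
    by apply/seteqP; split => x /= [k _ h]; exists k.
have half a : GR [set y | y <= a] := good_half i a si hN.
have itv a b : GR `]a, b]%classic.
  rewrite /GR /= (_ : _ @^-1` _ = ((fun x : PS => x i) @^-1` [set y | y <= b]) `&`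
     ~` ((fun x : PS => x i) @^-1` [set y | y <= a])).
    by apply: goodI; [exact: half | apply: goodC; exact: half].
  apply/seteqP; split => x /=; rewrite in_itv /=.
    by move=> /andP[h1 h2]; split => //; apply/negP; rewrite -ltNge.
  by move=> [h2 h1]; rewrite h2 andbT ltNge; apply/negP.
apply: (smallest_sub sGR _ mB).
by move=> _ [[a b] _ <-]; exact: itv.
Qed.

End good.

Lemma abs_sd {X Y} : measurable X -> measurable Y -> `|P X - P Y| <= P (sd X Y).
Proof.
move=> mX mY.
have h X' Y' : measurable X' -> measurable Y' -> P X' <= P Y' + P (sd X' Y').
  move=> mX' mY'; apply: le_trans _ (P_U2 mY' (sd_meas mX' mY')).
  apply: P_mono => //; first by apply: measurableU => //; exact: sd_meas.
  by move=> x Xx; case: (pselect (Y' x)) => Yx; [left|right; left].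
have := h _ _ mX mY; have := h _ _ mY mX; rewrite sd_sym => h1 h2.
rewrite ler_norml; apply/andP; split; lra.
Qed.

Lemma prod_bound (u v a b : R) : 0 <= u <= 1 -> 0 <= b <= 1 ->
  `|u * v - a * b| <= `|u - a| + `|v - b|.
Proof.
move=> /andP[u0 u1] /andP[b0 b1].
rewrite (_ : u * v - a * b = u * (v - b) + b * (u - a)); last by ring.
apply: le_trans (ler_normD _ _) _; rewrite !normrM addrC.
by apply: lerD; apply: ler_piMl => //; rewrite ger0_norm.
Qed.

Lemma sdI U V A B : sd (U `&` V) (A `&` B) `<=` sd U A `|` sd V B.
Proof.
move=> x; rewrite /sd /setD /setU /setI /=.
case: (pselect (A x)); case: (pselect (B x)); case: (pselect (U x)); case: (pselect (V x)); tauto.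
Qed.

Lemma val_E X Y : measurable X -> measurable Y ->
  (`|mu (X `&` Y) - mu X * mu Y|)%E = (`|P (X `&` Y) - P X * P Y|)%:E.
Proof.
move=> mX mY; have mXY := measurableI _ _ mX mY; rewrite !muE //.
Qed.

Lemma approx_val U V A B : measurable U -> measurable V -> measurable A -> measurable B ->
  `|P (U `&` V) - P U * P V| <=
    `|P (A `&` B) - P A * P B| + 2 * P (sd U A) + 2 * P (sd V B).
Proof.
move=> mU mV mA mB.
have mUV := measurableI _ _ mU mV; have mAB := measurableI _ _ mA mB.
have h1 := abs_sd mUV mAB.
have h2 : P (sd (U `&` V) (A `&` B)) <= P (sd U A) + P (sd V B).
  apply: le_trans (P_U2 (sd_meas mU mA) (sd_meas mV mB)).
  apply: P_mono; [exact: sd_meas|by apply: measurableU; exact: sd_meas|exact: sdI].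
have h3 := abs_sd mU mA; have h4 := abs_sd mV mB.
have hu : 0 <= P U <= 1 by rewrite P_ge0 /= P_le1.
have hb : 0 <= P B <= 1 by rewrite P_ge0 /= P_le1.
have h5 := @prod_bound (P U) (P V) (P A) (P B) hu hb.
have h6 := ler_distD (P (A `&` B)) (P (U `&` V)) (P U * P V).
have h7 := ler_distD (P A * P B) (P (A `&` B)) (P U * P V).
rewrite (distrC (P A * P B)) in h7.
lra.
Qed.

Section main.
Variable m : nat.
Hypothesis supp : supported_on_unit_cube R mu.

Lemma alpha_set_bound (r : \bar R) : (exists (j : nat) (U V : set PS),
     [/\ (1 <= j)%N, sigma_coords R [set i | (i < j)%N] U,
         sigma_coords R [set i | (j + m - 1 <= i)%N] V &
         r = `| mu (U `&` V) - mu U * mu V |%E]) -> (0%:E <= r /\ r <= 1%:E)%E.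
Proof.
move=> [j [U [V [_ sU sV ->]]]].
have mU := sigma_coords_sub _ _ sU; have mV := sigma_coords_sub _ _ sV.
have mUV := measurableI _ _ mU mV.
rewrite val_E // !lee_fin normr_ge0; split => //.
have h1 := P_ge0 (U `&` V); have h2 := P_le1 mUV.
have h3 : 0 <= P U * P V by rewrite mulr_ge0 // P_ge0.
have h4 : P U * P V <= 1 by rewrite mulr_ile1 ?P_ge0 ?P_le1.
rewrite ler_norml; apply/andP; split; lra.
Qed.

Lemma alpha_mix_fin : exists a : R, alpha_mix R mu m = a%:E /\ 0 <= a <= 1.
Proof.
have h1 : (alpha_mix R mu m <= 1%:E)%E.
  by apply/ereal_supP => r /alpha_set_bound [].
have h0 : (0%:E <= alpha_mix R mu m)%E.
  apply: le_ereal_sup_tmp.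
  have sT I : sigma_coords R I setT by exact: (@measurableT _ (g_sigma_algebraType (coord_gen R I))).
  exists (`| mu (setT `&` setT) - mu setT * mu setT |)%E.
    by exists 1%N, setT, setT; split => //; apply: sT.
  by have [] := alpha_set_bound _ (ex_intro _ 1%N (ex_intro _ setT (ex_intro _ setT
     (And4 (leqnn 1) (sT _) (sT _) erefl)))).
exists (fine (alpha_mix R mu m)); rewrite fineK; last first.
  by rewrite ge0_fin_numE // (le_lt_trans h1) // ltry.
split => //; apply/andP; split.
  by rewrite -lee_fin fineK // ge0_fin_numE // (le_lt_trans h1) // ltry.
by rewrite -lee_fin fineK // ge0_fin_numE // (le_lt_trans h1) // ltry.
Qed.

Lemma alpha_nlj_le n l j : (1 <= j)%N ->
  (alpha_nlj R mu m n l j <= alpha_mix R mu m)%E.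
Proof.
move=> j1; apply/ereal_supP => _ [S [T ->]]; apply: ereal_sup_ubound.
exists j, (dyadic_event R 0 j l S), (dyadic_event R (j + m - 1) (n - m - j + 1) l T).
split => //.
  by apply: dyadic_measI => t /=; rewrite add0n ltn_ord.
by apply: dyadic_measI => t /=; rewrite leq_addr.
Qed.

Lemma alpha_nl_le n l : (alpha_nl R mu m n l <= alpha_mix R mu m)%E.
Proof.
by apply/ereal_supP => _ [j /andP[j1 _] <-]; exact: alpha_nlj_le.
Qed.

Lemma alpha_nl_ge n l j S T : (1 <= j <= n - m)%N ->
  (`| mu (dyadic_event R 0 j l S `&` dyadic_event R (j + m - 1) (n - m - j + 1) l T)
      - mu (dyadic_event R 0 j l S) * mu (dyadic_event R (j + m - 1) (n - m - j + 1) l T) |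
   <= alpha_nl R mu m n l)%E.
Proof.
move=> hj; apply: le_ereal_sup_tmp; exists (alpha_nlj R mu m n l j); first by exists j.
by apply: le_ereal_sup_tmp; eexists; first by exists S, T.
Qed.

Lemma alpha_lower (a e : R) : alpha_mix R mu m = a%:E -> 0 < e ->
  exists N : nat, forall n l, (N <= n)%N -> (N <= l)%N ->
    ((a - e)%:E < alpha_nl R mu m n l)%E.
Proof.
move=> ha e0.
have : ((a - e / 2)%:E < alpha_mix R mu m)%E.
  by rewrite ha lte_fin ltrBlDr ltrDl divr_gt0.
move/ereal_sup_gt => [_ [j [U [V [j1 sU sV ->]]]] hr].
have mU := sigma_coords_sub _ _ sU; have mV := sigma_coords_sub _ _ sV.
rewrite val_E // lte_fin in hr.
have d0 : 0 < e / 8 by rewrite divr_gt0.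
have gU : good 0 (fun _ => j) U.
  apply: (good_sub_sigma _ _ supp [set i | (i < j)%N]) => //.
  move=> i B ij mB; apply: good_coord => //.
  by exists 0%N => n _; rewrite add0n.
have gV : good (j + m - 1) (fun n => n - m - j + 1)%N V.
  apply: (good_sub_sigma _ _ supp [set i | (j + m - 1 <= i)%N]) => //.
  move=> i B ij mB; apply: good_coord => //.
  by exists (i.+1 + j + m)%N => n hn /=; lia.
case: gU => _ /(_ _ d0) [N1 H1]; case: gV => _ /(_ _ d0) [N2 H2].
exists (maxn (maxn N1 N2) (j + m)) => n l hn hl.
have [S HS] := H1 l n ltac:(lia) ltac:(lia).
have [T HT] := H2 l n ltac:(lia) ltac:(lia).
have hj : (1 <= j <= n - m)%N by lia.
apply: lt_le_trans (alpha_nl_ge n l j S T hj).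
set A := dyadic_event R 0 j l S.
set B := dyadic_event R (j + m - 1) (n - m - j + 1) l T.
have mA : measurable A := dyadic_meas _ _ _ _.
have mB : measurable B := dyadic_meas _ _ _ _.
rewrite val_E // lte_fin.
have := approx_val _ _ _ _ mU mV mA mB.
lra.
Qed.

End main.
End approx.

Theorem proposition1 (R : realType) (mu : probability (pathspace R) R) (m : nat) :
  supported_on_unit_cube R mu -> stationary R mu -> ergodic R mu -> (0 < m)%N ->
  (fun p : nat * nat => alpha_nl R mu m p.1 p.2) @ filter_prod \oo \oo
    --> alpha_mix R mu m.
Proof.
move=> supp _ _ m0.
have [a [ha /andP[a0 a1]]] := alpha_mix_fin _ mu m.
rewrite ha; apply/fine_cvgP; split.
  exists ([set n | (m.+1 <= n)%N], [set l | (0 <= l)%N]); first by split; exists m.+1.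
  move=> [n l] [/= hn _].
  have hj : (1 <= 1 <= n - m)%N by lia.
  have h0 := alpha_nl_ge _ mu m n l 1 finset.set0 finset.set0 hj.
  rewrite ge0_fin_numE; last by apply: le_trans h0.
  by apply: le_lt_trans (alpha_nl_le _ mu m n l) _; rewrite ha ltry.
apply/cvgrPdist_lt => e e0.
have [N HN] := alpha_lower _ mu m supp a e ha e0.
exists ([set n | (N <= n)%N], [set l | (N <= l)%N]); first by split; exists N.
move=> [n l] [/= hn hl].
have h1 := HN n l hn hl; have h2 := alpha_nl_le _ mu m n l.
rewrite ha in h2.
have fn : alpha_nl R mu m n l \is a fin_num.
  rewrite fin_numE; apply/andP; split.
    by apply/eqP => h; rewrite h in h1.
  by apply/eqP => h; rewrite h in h2.
rewrite -(fineK fn) lte_fin in h1; rewrite -(fineK fn) lee_fin in h2.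
rewrite ger0_norm; last by rewrite subr_ge0.
lra.
Qed.
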